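(* Let $(\mathbf{x}^0,\mathbf{Z}^0,\Gamma^0)$ be any initialization with $\mathbf{x}^0\in\mathcal{X}$, and let $\{(\mathbf{x}^n,\mathbf{Z}^n,\Gamma^n)\}_{n\ge 0}$ be generated by the SPULTRA iteration defined in the context, where the image update step is solved exactly. Then: (i) the sequence $\{(\mathbf{x}^n,\mathbf{Z}^n,\Gamma^n)\}$ is bounded; (ii) the objective sequence $\{G(\mathbf{x}^n,\mathbf{Z}^n,\Gamma^n)\}$ is monotonically nonincreasing and converges to a finite limit $G^*=G^*(\mathbf{x}^0,\mathbf{Z}^0,\Gamma^0)$; (iii) every accumulation point $(\mathbf{x}^*,\mathbf{Z}^*,\Gamma^* )$ of the iterate sequence satisfies $G(\mathbf{x}^*,\mathbf{Z}^*,\Gamma^* )=G^*$; (iv) every accumulation point $(\mathbf{x}^*,\mathbf{Z}^*,\Gamma^* )$ satisfies the partial optimality conditions $$\mathbf{0}\in\partial_{\mathbf{x}}G(\mathbf{x},\mathbf{Z}^*,\Gamma^* )\big|_{\mathbf{x}=\mathbf{x}^*},\qquad (\mathbf{Z}^*,\Gamma^* )\in\arg\min_{\mathbf{Z},\Gamma}G(\mathbf{x}^*,\mathbf{Z},\Gamma),$$ where $\partial_{\mathbf{x}}$ denotes the (limiting) subdifferential of $G$ with respect to $\mathbf{x}$; (v) $\|\mathbf{x}^{n+1}-\mathbf{x}^n\|_2\to 0$ as $n\to\infty$.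
   Context: Data and model. $\mathbf{A}\in\mathbb{R}^{N_d\times N_p}$ is a matrix with nonnegative entries; write $l_i(\mathbf{x})=[\mathbf{A}\mathbf{x}]_i$. Constants: $I_0>0$, $\sigma^2\ge 0$, measurements $Y_i\in\mathbb{R}$, coefficients $s_{1_i},s_{2_i}\in\mathbb{R}$, $x_{\max}>0$. Let $f_i(l)=s_{1_i}l+s_{2_i}l^2$ and $$h_i(l)=\big(I_0e^{-f_i(l)}+\sigma^2\big)-Y_i\log\big(I_0e^{-f_i(l)}+\sigma^2\big),\qquad \mathsf{L}(\mathbf{x})=\sum_{i=1}^{N_d}h_i(l_i(\mathbf{x})).$$ Let $\mathcal{X}=\{\mathbf{x}\in\mathbb{R}^{N_p}:0\le x_j\le x_{\max}\ \forall j\}$ and $\mathfrak{X}(\mathbf{x})=0$ if $\mathbf{x}\in\mathcal{X}$, $+\infty$ otherwise. Regularizer. For $j=1,\dots,\tilde N$, $\mathbf{P}_j\in\mathbb{R}^{v\times N_p}$ extracts the $j$-th patch of $v$ voxels (a row-selection matrix); assume every voxel belongs to at least one patch. $\boldsymbol{\Omega}_1,\dots,\boldsymbol{\Omega}_K\in\mathbb{R}^{v\times v}$ are fixed nonsingular (pre-learned) transforms. Weights $\tau_j>0$, and $\beta>0$, $\gamma_c>0$. Variables: sparse code matrix $\mathbf{Z}=[\mathbf{z}_1,\dots,\mathbf{z}_{\tilde N}]$ with $\mathbf{z}_j\in\mathbb{R}^v$, and class vector $\Gamma\in\{1,\dots,K\}^{\tilde N}$. Define $$\mathsf{R}(\mathbf{x},\mathbf{Z},\Gamma)=\beta\sum_{j=1}^{\tilde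 N}\tau_j\Big(\|\boldsymbol{\Omega}_{\Gamma_j}\mathbf{P}_j\mathbf{x}-\mathbf{z}_j\|_2^2+\gamma_c^2\|\mathbf{z}_j\|_0\Big),$$ where $\|\cdot\|_0$ counts nonzero entries. The objective is $G(\mathbf{x},\mathbf{Z},\Gamma)=\mathsf{L}(\mathbf{x})+\mathsf{R}(\mathbf{x},\mathbf{Z},\Gamma)+\mathfrak{X}(\mathbf{x})$. Surrogates. Curvature functions $c_i:[0,\infty)\to(0,\infty)$ are continuous and chosen so that, with $$q_i(l;\bar l)=h_i(\bar l)+\dot h_i(\bar l)(l-\bar l)+\tfrac12 c_i(\bar l)(l-\bar l)^2,$$ one has $h_i(l)\le q_i(l;\bar l)$ for all $l\ge0$, $\bar l\ge 0$ (as achieved by the optimum-curvature rule $c_i(\bar l)=2\,[h_i(0)-h_i(\bar l)+\bar l\,\dot h_i(\bar l)]/\bar l^2$ for $\bar l>0$, $c_i(0)=\ddot h_i(0)$, with nonpositive values replaced by a small positive constant). For $\bar{\mathbf{x}}\in\mathcal{X}$ define the majorizer $$F(\mathbf{x},\mathbf{Z},\Gamma;\bar{\mathbf{x}})=\sum_{i=1}^{N_d}q_i\big(l_i(\mathbf{x});l_i(\bar{\mathbf{x}})\big)+\mathsf{R}(\mathbf{x},\mathbf{Z},\Gamma)+\mathfrak{X}(\mathbf{x}).$$ SPULTRA iteration (exact version). Given $(\mathbf{x}^n,\mathbf{Z}^n,\Gamma^n)$: image update $\mathbf{x}^{n+1}\in\arg\min_{\mathbf{x}}F(\mathbf{x},\mathbf{Z}^n,\Gamma^n;\mathbf{x}^n)$;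 then sparse coding and clustering $(\mathbf{Z}^{n+1},\Gamma^{n+1})\in\arg\min_{\mathbf{Z},\Gamma}\mathsf{R}(\mathbf{x}^{n+1},\mathbf{Z},\Gamma)$ (computed exactly: for each $j$, $\Gamma_j^{n+1}$ minimizes over $k$ the value $\|\boldsymbol{\Omega}_k\mathbf{P}_j\mathbf{x}^{n+1}-H_{\gamma_c}(\boldsymbol{\Omega}_k\mathbf{P}_j\mathbf{x}^{n+1})\|_2^2+\gamma_c^2\|H_{\gamma_c}(\boldsymbol{\Omega}_k\mathbf{P}_j\mathbf{x}^{n+1})\|_0$ and $\mathbf{z}_j^{n+1}=H_{\gamma_c}(\boldsymbol{\Omega}_{\Gamma_j^{n+1}}\mathbf{P}_j\mathbf{x}^{n+1})$, where $H_{\gamma_c}$ zeroes entries of magnitude less than $\gamma_c$ and keeps the others). *)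

(* Defs.v *)
From Stdlib Require Import Reals Lra.
Open Scope R_scope.

(* Vectors/matrices are functions on nat; only indices below the stated
   dimension matter.  sumR n f = f 0 + ... + f (n-1). *)
Fixpoint sumR (n : nat) (f : nat -> R) : R :=
  match n with O => 0 | S m => sumR m f + f m end.

Fixpoint allb (n : nat) (P : nat -> bool) : bool :=
  match n with O => true | S m => andb (allb m P) (P m) end.

(* Extended reals needed for the indicator function of the box. *)
Inductive ER : Type := Fin (r : R) | PInf.

Definition ER_le (a b : ER) : Prop :=
  match a, b with
  | Fin x, Fin y => x <= y
  | _, PInf => True
  | PInf, Fin _ => False
  end.

Definition dotn (n : nat) (u w : nat -> R) : R := sumR n (fun i => u i * w i).
Definition norm2 (n : nat) (u : nat -> R) : R := sqrt (dotn n u u).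
Definition vsub (u w : nat -> R) : nat -> R := fun i => u i - w i.

Definition vec_cv (n : nat) (xs : nat -> nat -> R) (x : nat -> R) : Prop :=
  forall i, (i < n)%nat -> Un_cv (fun k => xs k i) (x i).

Definition proj_l (Np : nat) (A : nat -> nat -> R) (x : nat -> R) (i : nat) : R :=
  sumR Np (fun p => A i p * x p).

Definition fi (s1 s2 : nat -> R) (i : nat) (l : R) : R := s1 i * l + s2 i * l ^ 2.
Definition gi (I0 sigma2 : R) (s1 s2 : nat -> R) (i : nat) (l : R) : R :=
  I0 * exp (- fi s1 s2 i l) + sigma2.
Definition hi (I0 sigma2 : R) (Y s1 s2 : nat -> R) (i : nat) (l : R) : R :=
  gi I0 sigma2 s1 s2 i l - Y i * ln (gi I0 sigma2 s1 s2 i l).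
Definition hdot (I0 sigma2 : R) (Y s1 s2 : nat -> R) (i : nat) (l : R) : R :=
  (- I0 * exp (- fi s1 s2 i l) * (s1 i + 2 * s2 i * l))
  * (1 - Y i / gi I0 sigma2 s1 s2 i l).

Definition qi (I0 sigma2 : R) (Y s1 s2 : nat -> R) (c : nat -> R -> R)
  (i : nat) (l lbar : R) : R :=
  hi I0 sigma2 Y s1 s2 i lbar + hdot I0 sigma2 Y s1 s2 i lbar * (l - lbar)
  + / 2 * c i lbar * (l - lbar) ^ 2.

Definition Lfid (Nd Np : nat) (A : nat -> nat -> R) (I0 sigma2 : R)
  (Y s1 s2 : nat -> R) (x : nat -> R) : R :=
  sumR Nd (fun i => hi I0 sigma2 Y s1 s2 i (proj_l Np A x i)).

Definition inX (Np : nat) (xmax : R) (x : nat -> R) : Prop :=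
  forall p, (p < Np)%nat -> 0 <= x p <= xmax.
Definition inXb (Np : nat) (xmax : R) (x : nat -> R) : bool :=
  allb Np (fun p => andb (if Rle_dec 0 (x p) then true else false)
                         (if Rle_dec (x p) xmax then true else false)).

Definition l0 (v : nat) (z : nat -> R) : R :=
  sumR v (fun r => if Req_EM_T (z r) 0 then 0 else 1).

(* || Omega_k P_j x - z ||_2^2 ; P_j x = (x (patch j 0), ..., x (patch j (v-1))) *)
Definition patch_res (v : nat) (Om : nat -> nat -> nat -> R)
  (patch : nat -> nat -> nat) (k j : nat) (x z : nat -> R) : R :=
  sumR v (fun r => (sumR v (fun col => Om k r col * x (patch j col)) - z r) ^ 2).

(* regularizer R(x, Z, Gamma); Z j = z_j, classes are 0..K-1 *)
Definition Reg (v Ntil : nat) (Om : nat -> nat -> nat -> R) (patch : nat -> nat -> nat)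
  (tau : nat -> R) (beta gc : R)
  (x : nat -> R) (Z : nat -> nat -> R) (Gm : nat -> nat) : R :=
  beta * sumR Ntil (fun j => tau j *
     (patch_res v Om patch (Gm j) j x (Z j) + gc ^ 2 * l0 v (Z j))).

Definition Gobj (Nd Np v Ntil : nat) (A : nat -> nat -> R) (I0 sigma2 : R)
  (Y s1 s2 : nat -> R) (xmax : R) (Om : nat -> nat -> nat -> R)
  (patch : nat -> nat -> nat) (tau : nat -> R) (beta gc : R)
  (x : nat -> R) (Z : nat -> nat -> R) (Gm : nat -> nat) : ER :=
  if inXb Np xmax x then
    Fin (Lfid Nd Np A I0 sigma2 Y s1 s2 x + Reg v Ntil Om patch tau beta gc x Z Gm)
  else PInf.

Definition Fmaj (Nd Np v Ntil : nat) (A : nat -> nat -> R) (I0 sigma2 : R)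
  (Y s1 s2 : nat -> R) (c : nat -> R -> R) (xmax : R)
  (Om : nat -> nat -> nat -> R) (patch : nat -> nat -> nat) (tau : nat -> R)
  (beta gc : R) (x : nat -> R) (Z : nat -> nat -> R) (Gm : nat -> nat)
  (xbar : nat -> R) : ER :=
  if inXb Np xmax x then
    Fin (sumR Nd (fun i => qi I0 sigma2 Y s1 s2 c i (proj_l Np A x i) (proj_l Np A xbar i))
         + Reg v Ntil Om patch tau beta gc x Z Gm)
  else PInf.

Definition frechet_subgrad (n : nat) (f : (nat -> R) -> ER) (x v : nat -> R) : Prop :=
  exists fx, f x = Fin fx /\
  forall eps, 0 < eps -> exists delta, 0 < delta /\
    forall y, norm2 n (vsub y x) < delta ->
      ER_le (Fin (fx + dotn n v (vsub y x) - eps * norm2 n (vsub y x))) (f y).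

Definition limiting_subgrad (n : nat) (f : (nat -> R) -> ER) (x v : nat -> R) : Prop :=
  exists (fx : R) (xk vk : nat -> nat -> R) (fk : nat -> R),
    f x = Fin fx /\
    (forall k, f (xk k) = Fin (fk k)) /\
    vec_cv n xk x /\ Un_cv fk fx /\
    (forall k, frechet_subgrad n f (xk k) (vk k)) /\
    vec_cv n vk v.

(* accumulation point of the iterates (x^n, Z^n, Gamma^n);
   Gamma takes values in a finite set, so convergence = eventual equality *)
Definition accum_point (Np v Ntil : nat) (xs : nat -> nat -> R)
  (Zs : nat -> nat -> nat -> R) (Gs : nat -> nat -> nat)
  (xst : nat -> R) (Zst : nat -> nat -> R) (Gst : nat -> nat) : Prop :=
  exists phi : nat -> nat,
    (forall k, (phi k < phi (S k))%nat) /\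
    vec_cv Np (fun k => xs (phi k)) xst /\
    (forall j r, (j < Ntil)%nat -> (r < v)%nat ->
        Un_cv (fun k => Zs (phi k) j r) (Zst j r)) /\
    (exists k0, forall k, (k0 <= k)%nat -> forall j, (j < Ntil)%nat ->
        Gs (phi k) j = Gst j).

Definition nonsingular (v : nat) (M : nat -> nat -> R) : Prop :=
  exists W : nat -> nat -> R,
    forall r col, (r < v)%nat -> (col < v)%nat ->
      sumR v (fun m => W r m * M m col) = (if Nat.eqb r col then 1 else 0) /\
      sumR v (fun m => M r m * W m col) = (if Nat.eqb r col then 1 else 0).

(* Main.v *)
Require Import Defs.
From Stdlib Require Import Reals Lra Lia.
From Coquelicot Require Import Coquelicot.
Open Scope R_scope.

Lemma sumR_ext n f g : (forall i, (i < n)%nat -> f i = g i) -> sumR n f = sumR n g.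
Proof. induction n; simpl; intros H; auto. rewrite IHn by (intros; apply H; lia). rewrite H by lia. auto. Qed.

Lemma sumR_plus n f g : sumR n (fun i => f i + g i) = sumR n f + sumR n g.
Proof. induction n; simpl; [ring|rewrite IHn; ring]. Qed.

Lemma sumR_minus n f g : sumR n (fun i => f i - g i) = sumR n f - sumR n g.
Proof. induction n; simpl; [ring|rewrite IHn; ring]. Qed.

Lemma sumR_scal n a f : sumR n (fun i => a * f i) = a * sumR n f.
Proof. induction n; simpl; [ring|rewrite IHn; ring]. Qed.

Lemma sumR_zero n : sumR n (fun _ => 0) = 0.
Proof. induction n; simpl; [ring|rewrite IHn; ring]. Qed.

Lemma sumR_le n f g : (forall i, (i < n)%nat -> f i <= g i) -> sumR n f <= sumR n g.
Proof. induction n; simpl; intros H; [lra|]. pose proof (H n ltac:(lia)).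
 assert (sumR n f <= sumR n g) by (apply IHn; intros; apply H; lia). lra. Qed.

Lemma sumR_nonneg n f : (forall i, (i < n)%nat -> 0 <= f i) -> 0 <= sumR n f.
Proof. intros H. rewrite <- (sumR_zero n). apply sumR_le. auto. Qed.

Lemma sumR_term_le n f k : (forall i, (i < n)%nat -> 0 <= f i) -> (k < n)%nat -> f k <= sumR n f.
Proof. induction n; simpl; intros H Hk; [lia|].
 destruct (Nat.eq_dec k n).
 - subst. assert (0 <= sumR n f) by (apply sumR_nonneg; intros; apply H; lia). lra.
 - pose proof (H n ltac:(lia)). assert (f k <= sumR n f) by (apply IHn; [intros; apply H; lia|lia]). lra. Qed.

Lemma sumR_abs n f : Rabs (sumR n f) <= sumR n (fun i => Rabs (f i)).
Proof. induction n; simpl. rewrite Rabs_R0; lra.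
 eapply Rle_trans; [apply Rabs_triang|]. lra. Qed.

Lemma sumR_swap n m (f : nat -> nat -> R) :
  sumR n (fun i => sumR m (fun j => f i j)) = sumR m (fun j => sumR n (fun i => f i j)).
Proof. induction n; simpl. rewrite sumR_zero; auto.
 rewrite IHn, <- sumR_plus. auto. Qed.

Lemma sumR_delta n q (f : nat -> R) : (q < n)%nat ->
  sumR n (fun p => if Nat.eqb q p then f p else 0) = f q.
Proof. induction n; simpl; intros H; [lia|].
 destruct (Nat.eq_dec q n).
 - subst. rewrite Nat.eqb_refl. rewrite (sumR_ext n _ (fun _ => 0)). rewrite sumR_zero; ring.
   intros i Hi. destruct (Nat.eqb_spec n i); [lia|auto].
 - rewrite IHn by lia. destruct (Nat.eqb_spec q n); [lia|ring]. Qed.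

Lemma sumR_diff_one n f g k : (k < n)%nat -> (forall i, (i < n)%nat -> i <> k -> f i = g i) ->
  sumR n f - sumR n g = f k - g k.
Proof. induction n; simpl; intros Hk H; [lia|].
 destruct (Nat.eq_dec k n).
 - subst. rewrite (sumR_ext n f g) by (intros; apply H; lia). ring.
 - rewrite (H n) by lia. assert (sumR n f - sumR n g = f k - g k) by (apply IHn; [lia| intros; apply H; lia]). lra. Qed.

Lemma cv_const a : Un_cv (fun _ => a) a.
Proof. intros e He. exists 0%nat. intros. unfold Rdist. rewrite Rminus_diag, Rabs_R0. auto. Qed.

Lemma sumR_cv n (f : nat -> nat -> R) L : (forall i, (i < n)%nat -> Un_cv (fun k => f k i) (L i)) ->
  Un_cv (fun k => sumR n (f k)) (sumR n L).
Proof. induction n; simpl; intros H. apply cv_const.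
 apply CV_plus; [apply IHn; intros; apply H; lia| apply H; lia]. Qed.

Lemma cv_eventual u w l : Un_cv u l -> (exists N, forall n, (N <= n)%nat -> u n = w n) -> Un_cv w l.
Proof. intros Hu [N HN] e He. destruct (Hu e He) as [M HM]. exists (max N M). intros n Hn.
 rewrite <- HN by lia. apply HM; lia. Qed.

Lemma cv_le u w a b : Un_cv u a -> Un_cv w b -> (exists N, forall n, (N <= n)%nat -> u n <= w n) -> a <= b.
Proof. intros Hu Hw [N HN]. destruct (Rle_or_lt a b) as [|Hlt]; auto. exfalso.
 destruct (Hu ((a-b)/2) ltac:(lra)) as [M1 H1]. destruct (Hw ((a-b)/2) ltac:(lra)) as [M2 H2].
 set (n := max N (max M1 M2)). specialize (H1 n ltac:(lia)). specialize (H2 n ltac:(lia)).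
 specialize (HN n ltac:(lia)). unfold Rdist in *. apply Rabs_def2 in H1. apply Rabs_def2 in H2. lra. Qed.

Lemma cv_bounds u a lo hi : Un_cv u a -> (exists N, forall n, (N <= n)%nat -> lo <= u n <= hi) -> lo <= a <= hi.
Proof. intros Hu [N HN]. split.
 - apply (cv_le (fun _ => lo) u); auto. apply cv_const. exists N; intros; apply HN; auto.
 - apply (cv_le u (fun _ => hi)); auto. apply cv_const. exists N; intros; apply HN; auto. Qed.

Lemma cv_sub u l (phi : nat -> nat) : Un_cv u l -> (forall k, (phi k < phi (S k))%nat) -> Un_cv (fun k => u (phi k)) l.
Proof. intros Hu Hphi. assert (Hge : forall k, (k <= phi k)%nat).
 { induction k; [lia| specialize (Hphi k); lia]. }
 intros e He. destruct (Hu e He) as [N HN]. exists N. intros n Hn. apply HN. specialize (Hge n); lia. Qed.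

Lemma cv_limit1_in f D l x0 u : limit1_in f D l x0 -> Un_cv u x0 -> (forall n, D (u n)) ->
  Un_cv (fun n => f (u n)) l.
Proof. intros Hf Hu HD e He. destruct (Hf e He) as [a [Ha H]]. destruct (Hu a Ha) as [N HN].
 exists N. intros n Hn. apply (H (u n)). split; [auto| apply HN; auto]. Qed.

Lemma cv_cont f u l : (forall x, continuity_pt f x) -> Un_cv u l -> Un_cv (fun n => f (u n)) (f l).
Proof. intros Hf Hu. exact (continuity_seq f u l (Hf l) Hu). Qed.

Lemma dotn_nonneg n u : 0 <= dotn n u u.
Proof. unfold dotn. apply sumR_nonneg. intros. nra. Qed.

Lemma coord_sq_le n u i : (i < n)%nat -> u i * u i <= dotn n u u.
Proof. intros. unfold dotn. apply (sumR_term_le n (fun i => u i * u i)); auto. intros; nra. Qed.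

Lemma coord_le n u i : (i < n)%nat -> Rabs (u i) <= norm2 n u.
Proof. intros H. unfold norm2. rewrite <- sqrt_Rsqr_abs. apply sqrt_le_1_alt.
 unfold Rsqr. apply coord_sq_le; auto. Qed.

Lemma norm2_nonneg n u : 0 <= norm2 n u.
Proof. apply sqrt_pos. Qed.

Lemma abs_lin n a u : Rabs (sumR n (fun i => a i * u i)) <= sumR n (fun i => Rabs (a i)) * norm2 n u.
Proof. eapply Rle_trans; [apply sumR_abs|]. rewrite Rmult_comm, <- sumR_scal. apply sumR_le.
 intros i Hi. rewrite Rabs_mult. pose proof (coord_le n u i Hi). pose proof (Rabs_pos (a i)). nra. Qed.

Lemma fin_min n (P : nat -> R -> Prop) :
  (forall i, (i < n)%nat -> exists d, 0 < d /\ forall d', 0 < d' -> d' <= d -> P i d') ->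
  exists d, 0 < d /\ forall d', 0 < d' -> d' <= d -> forall i, (i < n)%nat -> P i d'.
Proof. induction n; intros H.
 - exists 1. split; [lra|]. intros; lia.
 - destruct IHn as [d1 [Hd1 H1]]. { intros; apply H; lia. }
   destruct (H n ltac:(lia)) as [d2 [Hd2 H2]]. exists (Rmin d1 d2). split. apply Rmin_pos; auto.
   intros d' Hd' Hle i Hi. pose proof (Rmin_l d1 d2). pose proof (Rmin_r d1 d2).
   destruct (Nat.eq_dec i n). subst. apply H2; lra. apply H1; [lra|lra|lia]. Qed.

Lemma allb_iff n P : allb n P = true <-> forall i, (i < n)%nat -> P i = true.
Proof. induction n; simpl; split; intros H.
 - intros; lia.
 - auto.
 - apply andb_prop in H as [H1 H2]. intros i Hi. destruct (Nat.eq_dec i n). subst; auto.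
   apply IHn; auto; lia.
 - rewrite (proj2 IHn); [|intros; apply H; lia]. rewrite H by lia. auto. Qed.

Lemma inXb_iff Np xmax x : inXb Np xmax x = true <-> inX Np xmax x.
Proof. unfold inXb, inX. rewrite allb_iff. split; intros H p Hp; specialize (H p Hp).
 - destruct (Rle_dec 0 (x p)), (Rle_dec (x p) xmax); simpl in H; try discriminate; lra.
 - destruct (Rle_dec 0 (x p)), (Rle_dec (x p) xmax); simpl; auto; lra. Qed.

Lemma hi_derive I0 sigma2 Y s1 s2 i l : 0 < I0 -> 0 <= sigma2 ->
  derivable_pt_lim (hi I0 sigma2 Y s1 s2 i) l (hdot I0 sigma2 Y s1 s2 i l).
Proof. intros HI Hs. apply is_derive_Reals. unfold hi, hdot, gi, fi.
 set (a := s1 i). set (b := s2 i).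
 assert (E: exp (- (a*l+b*(l*(l*1)))) = exp(-(a*l+b*l^2))) by (f_equal; ring).
 pose proof (exp_pos (- (a*l + b*l^2))).
 auto_derive; rewrite E. nra. field. nra. Qed.

Lemma ex_der_cont f x : ex_derive f x -> continuity_pt f x.
Proof. intros [l Hl]. apply derivable_continuous_pt. exists l. apply is_derive_Reals; auto. Qed.

Lemma hi_cont I0 sigma2 Y s1 s2 i l : 0 < I0 -> 0 <= sigma2 -> continuity_pt (hi I0 sigma2 Y s1 s2 i) l.
Proof. intros. apply ex_der_cont. eexists. apply is_derive_Reals. apply hi_derive; auto. Qed.

Lemma hdot_cont I0 sigma2 Y s1 s2 i l : 0 < I0 -> 0 <= sigma2 -> continuity_pt (hdot I0 sigma2 Y s1 s2 i) l.
Proof. intros HI Hs. apply ex_der_cont. unfold hdot, gi, fi.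
 set (a := s1 i). set (b := s2 i).
 assert (E: exp (- (a*l+b*(l*(l*1)))) = exp(-(a*l+b*l^2))) by (f_equal; ring).
 pose proof (exp_pos (- (a*l + b*l^2))).
 auto_derive. rewrite E. nra. Qed.

Lemma qi_same I0 sigma2 Y s1 s2 c i l : qi I0 sigma2 Y s1 s2 c i l l = hi I0 sigma2 Y s1 s2 i l.
Proof. unfold qi. ring. Qed.

Lemma cv_ext u w l : (forall n, u n = w n) -> Un_cv u l -> Un_cv w l.
Proof. intros H Hu. apply (cv_eventual u); auto. exists 0%nat; auto. Qed.

Lemma cv_sq u l : Un_cv u l -> Un_cv (fun k => (u k)^2) (l^2).
Proof. intros H. apply (cv_ext (fun k => u k * u k)). intros; ring.
 replace (l^2) with (l*l) by ring. apply CV_mult; auto. Qed.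

Lemma cv_scal a u l : Un_cv u l -> Un_cv (fun k => a * u k) (a * l).
Proof. intros H. apply CV_mult; auto. apply cv_const. Qed.

Lemma proj_l_cv Np A (xk : nat -> nat -> R) x i : vec_cv Np xk x ->
  Un_cv (fun k => proj_l Np A (xk k) i) (proj_l Np A x i).
Proof. intros H. unfold proj_l. apply (sumR_cv Np (fun k p => A i p * xk k p)).
 intros p Hp. apply cv_scal. apply H; auto. Qed.

Lemma qi_cv I0 sigma2 Y s1 s2 c i lk mk l m : 0 < I0 -> 0 <= sigma2 ->
  limit1_in (c i) (fun t => 0 <= t) (c i m) m -> (forall k, 0 <= mk k) ->
  Un_cv lk l -> Un_cv mk m ->
  Un_cv (fun k => qi I0 sigma2 Y s1 s2 c i (lk k) (mk k)) (qi I0 sigma2 Y s1 s2 c i l m).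
Proof. intros HI Hs Hc Hm Hl Hmm. unfold qi.
 assert (D: Un_cv (fun k => lk k - mk k) (l - m)) by (apply CV_minus; auto).
 apply CV_plus. apply CV_plus.
 - apply cv_cont; auto. intros; apply hi_cont; auto.
 - apply CV_mult; auto. apply cv_cont; auto. intros; apply hdot_cont; auto.
 - apply CV_mult; [apply cv_scal|apply cv_sq; auto]. apply (cv_limit1_in (c i) (fun t => 0 <= t) (c i m) m mk); auto. Qed.

Lemma sumR_lin_mid n (a x y : nat -> R) :
  sumR n (fun i => a i * ((x i + y i) / 2)) = (sumR n (fun i => a i * x i) + sumR n (fun i => a i * y i)) / 2.
Proof. induction n; simpl. field. rewrite IHn. field. Qed.

Lemma sumR_lin_diff n (a x y : nat -> R) :
  sumR n (fun i => a i * (x i - y i)) = sumR n (fun i => a i * x i) - sumR n (fun i => a i * y i).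
Proof. induction n; simpl. ring. rewrite IHn. ring. Qed.

Lemma sumR_comb n f g h : sumR n f + sumR n g - 2 * sumR n h = sumR n (fun i => f i + g i - 2 * h i).
Proof. induction n; simpl. ring. rewrite <- IHn. ring. Qed.

Lemma dot_vsub_sym n a b : dotn n (vsub a b) (vsub a b) = dotn n (vsub b a) (vsub b a).
Proof. unfold dotn, vsub. apply sumR_ext. intros; ring. Qed.
From Stdlib Require Import FunctionalExtensionality.

Section Model.
Variables (Nd Np v Ntil K : nat) (A : nat -> nat -> R)
  (I0 sigma2 xmax beta gc : R) (Y s1 s2 tau : nat -> R)
  (patch : nat -> nat -> nat) (Om : nat -> nat -> nat -> R)
  (c : nat -> R -> R)
  (xs : nat -> nat -> R) (Zs : nat -> nat -> nat -> R) (Gs : nat -> nat -> nat).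
Hypotheses
  (HA : forall i p, (i < Nd)%nat -> (p < Np)%nat -> 0 <= A i p)
  (HI0 : 0 < I0) (Hsigma : 0 <= sigma2) (Hxmax : 0 < xmax)
  (Hpatch : forall j r, (j < Ntil)%nat -> (r < v)%nat -> (patch j r < Np)%nat)
  (Hcover : forall p, (p < Np)%nat ->
      exists j r, (j < Ntil)%nat /\ (r < v)%nat /\ patch j r = p)
  (HOm : forall k, (k < K)%nat -> nonsingular v (Om k))
  (Htau : forall j, (j < Ntil)%nat -> 0 < tau j)
  (Hbeta : 0 < beta) (Hgc : 0 < gc)
  (Hcpos : forall i l, (i < Nd)%nat -> 0 <= l -> 0 < c i l)
  (Hccont : forall i l, (i < Nd)%nat -> 0 <= l ->
      limit1_in (c i) (fun t => 0 <= t) (c i l) l)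
  (Hcmaj : forall i l lbar, (i < Nd)%nat -> 0 <= l -> 0 <= lbar ->
      hi I0 sigma2 Y s1 s2 i l <= qi I0 sigma2 Y s1 s2 c i l lbar)
  (Hx0 : inX Np xmax (xs 0%nat))
  (HG0 : forall j, (j < Ntil)%nat -> (Gs 0%nat j < K)%nat)
  (Himg : forall n x,
      ER_le (Fmaj Nd Np v Ntil A I0 sigma2 Y s1 s2 c xmax Om patch tau beta gc
               (xs (S n)) (Zs n) (Gs n) (xs n))
            (Fmaj Nd Np v Ntil A I0 sigma2 Y s1 s2 c xmax Om patch tau beta gc
               x (Zs n) (Gs n) (xs n)))
  (HZG_feas : forall n j, (j < Ntil)%nat -> (Gs (S n) j < K)%nat)
  (HZG : forall n Z Gm, (forall j, (j < Ntil)%nat -> (Gm j < K)%nat) ->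
      Reg v Ntil Om patch tau beta gc (xs (S n)) (Zs (S n)) (Gs (S n))
      <= Reg v Ntil Om patch tau beta gc (xs (S n)) Z Gm).

Definition Lf x := Lfid Nd Np A I0 sigma2 Y s1 s2 x.
Definition Rg x Z Gm := Reg v Ntil Om patch tau beta gc x Z Gm.
Definition PhiF xbar Z Gm x :=
  sumR Nd (fun i => qi I0 sigma2 Y s1 s2 c i (proj_l Np A x i) (proj_l Np A xbar i)) + Rg x Z Gm.
Definition gfun n := Lf (xs n) + Rg (xs n) (Zs n) (Gs n).
Definition mid (a b : nat -> R) := fun p => (a p + b p) / 2.
Definition feas (Gm : nat -> nat) := forall j, (j < Ntil)%nat -> (Gm j < K)%nat.

Lemma Fmaj_eq x Z Gm xbar : Fmaj Nd Np v Ntil A I0 sigma2 Y s1 s2 c xmax Om patch tau beta gc x Z Gm xbar =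
  if inXb Np xmax x then Fin (PhiF xbar Z Gm x) else PInf.
Proof. reflexivity. Qed.

Lemma zero_inX : inX Np xmax (fun _ => 0).
Proof. intros p Hp; lra. Qed.

Lemma xs_inX n : inX Np xmax (xs n).
Proof. destruct n; auto. specialize (Himg n (fun _ => 0)). rewrite !Fmaj_eq in Himg.
 rewrite (proj2 (inXb_iff _ _ _) zero_inX) in Himg.
 destruct (inXb Np xmax (xs (S n))) eqn:E. apply inXb_iff; auto. simpl in Himg. contradiction. Qed.

Lemma Gs_feas n : feas (Gs n).
Proof. destruct n; intros j Hj; auto. Qed.

Lemma mid_inX a b : inX Np xmax a -> inX Np xmax b -> inX Np xmax (mid a b).
Proof. intros Ha Hb p Hp. specialize (Ha p Hp). specialize (Hb p Hp). unfold mid. lra. Qed.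

Lemma proj_l_nonneg x i : inX Np xmax x -> (i < Nd)%nat -> 0 <= proj_l Np A x i.
Proof. intros Hx Hi. unfold proj_l. apply sumR_nonneg. intros p Hp.
 specialize (Hx p Hp). specialize (HA i p Hi Hp). nra. Qed.

Lemma proj_l_ub x i : inX Np xmax x -> (i < Nd)%nat -> proj_l Np A x i <= sumR Np (fun p => A i p * xmax).
Proof. intros Hx Hi. unfold proj_l. apply sumR_le. intros p Hp.
 specialize (Hx p Hp). specialize (HA i p Hi Hp). nra. Qed.

Lemma proj_l_mid a b i : proj_l Np A (mid a b) i = (proj_l Np A a i + proj_l Np A b i) / 2.
Proof. unfold proj_l, mid. apply sumR_lin_mid. Qed.

Lemma proj_l_lip y x i : Rabs (proj_l Np A y i - proj_l Np A x i) <=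
   sumR Np (fun p => Rabs (A i p)) * norm2 Np (vsub y x).
Proof. unfold proj_l. rewrite <- sumR_lin_diff. apply abs_lin. Qed.

Lemma Reg_nonneg x Z Gm : 0 <= Rg x Z Gm.
Proof. unfold Rg, Reg. apply Rmult_le_pos; [lra|]. apply sumR_nonneg. intros j Hj.
 apply Rmult_le_pos. pose proof (Htau j Hj); lra.
 apply Rplus_le_le_0_compat. unfold patch_res. apply sumR_nonneg. intros; apply pow2_ge_0.
 apply Rmult_le_pos. apply pow2_ge_0. unfold l0. apply sumR_nonneg. intros. destruct Req_EM_T; lra. Qed.

Lemma hi_lb i : (i < Nd)%nat -> exists B, forall l, 0 <= l <= sumR Np (fun p => A i p * xmax) ->
   B <= hi I0 sigma2 Y s1 s2 i l.
Proof. intros Hi. assert (0 <= sumR Np (fun p => A i p * xmax)).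
 { apply sumR_nonneg. intros p Hp. specialize (HA i p Hi Hp). nra. }
 destruct (continuity_ab_min (hi I0 sigma2 Y s1 s2 i) 0 (sumR Np (fun p => A i p * xmax))) as [m Hm]; auto.
 intros; apply hi_cont; auto.
 exists (hi I0 sigma2 Y s1 s2 i m). intros l Hl. apply Hm; auto. Qed.

Lemma Lf_lb : exists B, forall x, inX Np xmax x -> B <= Lf x.
Proof.
 assert (H: forall n, (n <= Nd)%nat -> exists B, forall x, inX Np xmax x ->
   B <= sumR n (fun i => hi I0 sigma2 Y s1 s2 i (proj_l Np A x i))).
 { induction n; intros Hn. exists 0. intros; simpl; lra.
   destruct IHn as [B1 H1]; [lia|]. destruct (hi_lb n) as [B2 H2]; [lia|].
   exists (B1 + B2). intros x Hx. simpl. specialize (H1 x Hx).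
   assert (B2 <= hi I0 sigma2 Y s1 s2 n (proj_l Np A x n)).
   { apply H2. split. apply proj_l_nonneg; auto; lia. apply proj_l_ub; auto; lia. }
   lra. }
 destruct (H Nd (le_n _)) as [B HB]. exists B. intros; apply HB; auto. Qed.


Lemma beta_comb n f g h : beta * sumR n f + beta * sumR n g - 2 * (beta * sumR n h) =
  beta * sumR n (fun i => f i + g i - 2 * h i).
Proof. rewrite <- sumR_comb. ring. Qed.

Lemma Reg_mid x y Z Gm : Rg x Z Gm + Rg y Z Gm - 2 * Rg (mid x y) Z Gm =
  beta * sumR Ntil (fun j => tau j * (/2 * sumR v (fun r =>
     (sumR v (fun col => Om (Gm j) r col * (x (patch j col) - y (patch j col))))^2))).
Proof. unfold Rg, Reg. rewrite beta_comb. f_equal. apply sumR_ext. intros j Hj. unfold patch_res.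
 match goal with |- tau j * (?P1 + ?L) + tau j * (?P2 + _) - 2 * (tau j * (?P3 + _)) = _ =>
   transitivity (tau j * (P1 + P2 - 2 * P3)); [ring|] end.
 rewrite sumR_comb. f_equal. rewrite <- sumR_scal. apply sumR_ext. intros r Hr. unfold mid.
 rewrite (sumR_lin_mid v), (sumR_lin_diff v). field. Qed.

Lemma tau_min : exists t, 0 < t /\ forall j, (j < Ntil)%nat -> t <= tau j.
Proof. destruct (fin_min Ntil (fun j d => d <= tau j)) as [d [Hd H]].
 - intros j Hj. exists (tau j). split; [apply Htau; auto|]. intros; lra.
 - exists d. split; auto. intros j Hj. apply H; auto; lra. Qed.

Lemma Om_lb : exists e, 0 < e /\ forall k, (k < K)%nat -> forall w,
  e * sumR v (fun r => (w r)^2) <= sumR v (fun r => (sumR v (fun col => Om k r col * w col))^2).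
Proof. destruct (fin_min K (fun k e => forall w,
  e * sumR v (fun r => (w r)^2) <= sumR v (fun r => (sumR v (fun col => Om k r col * w col))^2))) as [d [Hd H]].
 2:{ exists d. split; auto. intros k Hk w. apply H; auto; lra. }
 intros k Hk. destruct (HOm k Hk) as [W HW].
 set (a := fun r => sumR v (fun m => Rabs (W r m))).
 set (C := sumR v (fun r => (a r)^2)).
 assert (HC : 0 <= C) by (apply sumR_nonneg; intros; apply pow2_ge_0).
 exists (/ (C + 1)). split. apply Rinv_0_lt_compat; lra.
 intros d' Hd' Hle w.
 set (u := fun m => sumR v (fun col => Om k m col * w col)).
 assert (Hw : forall r, (r < v)%nat -> w r = sumR v (fun m => W r m * u m)).
 { intros r Hr. unfold u.
   transitivity (sumR v (fun col => if Nat.eqb r col then w col else 0)).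
   { symmetry; apply sumR_delta; auto. }
   transitivity (sumR v (fun col => sumR v (fun m => W r m * (Om k m col * w col)))).
   { apply sumR_ext. intros col Hcol. rewrite (sumR_ext v _ (fun m => w col * (W r m * Om k m col))) by (intros; ring).
     rewrite sumR_scal. destruct (HW r col Hr Hcol) as [H1 _]. rewrite H1.
     destruct (Nat.eqb r col); ring. }
   rewrite <- sumR_swap. apply sumR_ext. intros m Hm. rewrite <- sumR_scal. auto. }
 assert (Hdu : 0 <= dotn v u u) by apply dotn_nonneg.
 assert (Hsq : forall r, (r < v)%nat -> (w r)^2 <= (a r)^2 * dotn v u u).
 { intros r Hr. rewrite Hw by auto. pose proof (abs_lin v (fun m => W r m) u) as Hb.
   fold (a r) in Hb. pose proof (norm2_nonneg v u). pose proof (Rabs_pos (sumR v (fun m => W r m * u m))).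
   assert (Hn : norm2 v u * norm2 v u = dotn v u u) by (unfold norm2; apply sqrt_sqrt; auto).
   rewrite <- Rsqr_pow2, Rsqr_abs. unfold Rsqr.
   assert (Rabs (sumR v (fun m => W r m * u m)) * Rabs (sumR v (fun m => W r m * u m)) <= (a r * norm2 v u) * (a r * norm2 v u)).
   { apply Rmult_le_compat; auto. }
   nra. }
 assert (HS : sumR v (fun r => (w r)^2) <= C * dotn v u u).
 { unfold C. rewrite Rmult_comm, <- sumR_scal. apply sumR_le. intros r Hr. rewrite Rmult_comm. auto. }
 assert (HT : dotn v u u = sumR v (fun r => (u r)^2)) by (unfold dotn; apply sumR_ext; intros; ring).
 assert (HS0 : 0 <= sumR v (fun r => (w r)^2)) by (apply sumR_nonneg; intros; apply pow2_ge_0).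
 change (d' * sumR v (fun r => (w r)^2) <= sumR v (fun r => (u r)^2)). rewrite <- HT.
 apply Rle_trans with (/ (C + 1) * sumR v (fun r => (w r)^2)). apply Rmult_le_compat_r; auto.
 apply Rle_trans with (/ (C+1) * (C * dotn v u u)). apply Rmult_le_compat_l; auto. left; apply Rinv_0_lt_compat; lra.
 assert (/ (C+1) * C <= 1). { apply (Rmult_le_reg_l (C+1)). lra. rewrite <- Rmult_assoc, Rinv_r by lra. lra. }
 nra. Qed.

Lemma cover (d : nat -> R) : dotn Np d d <= sumR Ntil (fun j => sumR v (fun r => (d (patch j r))^2)).
Proof.
 apply Rle_trans with (sumR Np (fun p => sumR Ntil (fun j => sumR v (fun r => if Nat.eqb (patch j r) p then d p * d p else 0)))).
 - unfold dotn. apply sumR_le. intros p Hp. destruct (Hcover p Hp) as [j0 [r0 [Hj0 [Hr0 He]]]].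
   assert (Hnn : forall j r, 0 <= (if Nat.eqb (patch j r) p then d p * d p else 0)).
   { intros; destruct Nat.eqb; [nra|lra]. }
   eapply Rle_trans; [|apply (sumR_term_le Ntil _ j0)]; auto.
   2:{ intros; apply sumR_nonneg; auto. }
   eapply Rle_trans; [|apply (sumR_term_le v _ r0)]; auto.
   cbv beta. rewrite He, Nat.eqb_refl. lra.
 - rewrite sumR_swap. apply Req_le. apply sumR_ext. intros j Hj. rewrite sumR_swap. apply sumR_ext.
   intros r Hr. rewrite (sumR_delta Np (patch j r) (fun p => d p * d p)). ring. auto. Qed.

Lemma Reg_conv : exists kappa, 0 < kappa /\ forall x y Z Gm, feas Gm ->
  kappa * dotn Np (vsub x y) (vsub x y) <= Rg x Z Gm + Rg y Z Gm - 2 * Rg (mid x y) Z Gm.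
Proof. destruct tau_min as [t [Ht Htj]]. destruct Om_lb as [e [He Hek]].
 exists (beta * (t * e / 2)). split. apply Rmult_lt_0_compat; auto. apply Rmult_lt_0_compat; [nra|lra].
 intros x y Z Gm HGm. rewrite Reg_mid. rewrite Rmult_assoc. apply Rmult_le_compat_l; [lra|].
 set (d := vsub x y).
 apply Rle_trans with (t * e / 2 * sumR Ntil (fun j => sumR v (fun r => (d (patch j r))^2))).
 apply Rmult_le_compat_l. nra. apply cover.
 rewrite <- sumR_scal. apply sumR_le. intros j Hj.
 specialize (Hek (Gm j) (HGm j Hj) (fun col => d (patch j col))). cbv beta in Hek.
 assert (Hs : 0 <= sumR v (fun r => (d (patch j r))^2)) by (apply sumR_nonneg; intros; apply pow2_ge_0).
 specialize (Htj j Hj). unfold d, vsub in Hek, Hs |- *.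
 match type of Hek with ?E * ?S <= ?T => match goal with |- _ <= tau j * (/2 * ?T') =>
   assert (T = T') by reflexivity; set (SS := S) in *; set (TT := T) in *; set (TT' := T') in * end end.
 assert (t * (e*SS) <= tau j * TT) by (apply Rmult_le_compat; nra). subst TT. lra. Qed.


Lemma inXb_true x : inX Np xmax x -> inXb Np xmax x = true.
Proof. intros; apply inXb_iff; auto. Qed.

Lemma Qsum_same x : sumR Nd (fun i => qi I0 sigma2 Y s1 s2 c i (proj_l Np A x i) (proj_l Np A x i)) = Lf x.
Proof. unfold Lf, Lfid. apply sumR_ext. intros; apply qi_same. Qed.

Lemma descent : exists kappa, 0 < kappa /\ forall n,
  gfun (S n) + kappa * dotn Np (vsub (xs (S n)) (xs n)) (vsub (xs (S n)) (xs n)) <= gfun n.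
Proof. destruct Reg_conv as [k [Hk HR]]. exists k. split; auto. intros n.
 set (a := xs n). set (b := xs (S n)). set (m := mid a b).
 assert (Ha : inX Np xmax a) by apply xs_inX. assert (Hb : inX Np xmax b) by apply xs_inX.
 assert (Hm : inX Np xmax m) by (apply mid_inX; auto).
 assert (H1 : PhiF a (Zs n) (Gs n) b <= PhiF a (Zs n) (Gs n) m).
 { specialize (Himg n m). rewrite !Fmaj_eq, !inXb_true in Himg by auto. exact Himg. }
 assert (H2 : k * dotn Np (vsub a b) (vsub a b) <=
     PhiF a (Zs n) (Gs n) a + PhiF a (Zs n) (Gs n) b - 2 * PhiF a (Zs n) (Gs n) m).
 { unfold PhiF. specialize (HR a b (Zs n) (Gs n) (Gs_feas n)).
   match goal with |- _ <= ?S1 + _ + (?S2 + _) - 2 * (?S3 + _) =>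
     assert (0 <= S1 + S2 - 2 * S3) end.
   { rewrite sumR_comb. apply sumR_nonneg. intros i Hi. unfold m. rewrite proj_l_mid.
     unfold qi. pose proof (Hcpos i (proj_l Np A a i) Hi (proj_l_nonneg a i Ha Hi)).
     match goal with |- 0 <= ?E => replace E with (/4 * c i (proj_l Np A a i) * (proj_l Np A a i - proj_l Np A b i)^2) by field end.
     apply Rmult_le_pos; [lra|apply pow2_ge_0]. }
   unfold m in *. revert H HR. generalize (k * dotn Np (vsub a b) (vsub a b)). intros. lra. }
 assert (H3 : PhiF a (Zs n) (Gs n) a = gfun n).
 { unfold PhiF, gfun. rewrite Qsum_same. auto. }
 assert (H4 : gfun (S n) <= PhiF a (Zs n) (Gs n) b).
 { unfold gfun, PhiF. fold b. pose proof (HZG n (Zs n) (Gs n) (Gs_feas n)). fold b in H.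
   assert (Lf b <= sumR Nd (fun i => qi I0 sigma2 Y s1 s2 c i (proj_l Np A b i) (proj_l Np A a i))).
   { unfold Lf, Lfid. apply sumR_le. intros i Hi. apply Hcmaj; auto; apply proj_l_nonneg; auto. }
   unfold Rg. lra. }
 rewrite dot_vsub_sym. fold a b. lra. Qed.

Lemma gfun_lb : exists B, forall n, B <= gfun n.
Proof. destruct Lf_lb as [B HB]. exists B. intros n. unfold gfun.
 pose proof (HB (xs n) (xs_inX n)). pose proof (Reg_nonneg (xs n) (Zs n) (Gs n)). lra. Qed.

Lemma gfun_dec n : gfun (S n) <= gfun n.
Proof. destruct descent as [k [Hk H]]. specialize (H n).
 pose proof (dotn_nonneg Np (vsub (xs (S n)) (xs n))). nra. Qed.

Lemma gfun_cv : exists Gstar, Un_cv gfun Gstar.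
Proof. destruct gfun_lb as [B HB]. destruct (decreasing_cv gfun) as [l Hl].
 - intros n. apply gfun_dec.
 - exists (- B). intros x [n ->]. specialize (HB n). unfold opp_seq. lra.
 - exists l; auto. Qed.

Lemma step_cv : Un_cv (fun n => norm2 Np (vsub (xs (S n)) (xs n))) 0.
Proof. destruct descent as [k [Hk H]]. destruct gfun_cv as [G HG].
 intros e He. destruct (HG (k * (e * e) / 2)) as [N HN]. { assert (0 < k*(e*e)) by (apply Rmult_lt_0_compat; nra). lra. }
 exists N. intros n Hn. pose proof (HN n Hn) as A1. pose proof (HN (S n) ltac:(lia)) as A2.
 unfold Rdist in *. apply Rabs_def2 in A1. apply Rabs_def2 in A2. specialize (H n).
 set (D := dotn Np (vsub (xs (S n)) (xs n)) (vsub (xs (S n)) (xs n))) in *.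
 assert (HD : D < e * e). { apply (Rmult_lt_reg_l k); auto. lra. }
 assert (0 <= D) by apply dotn_nonneg.
 rewrite Rminus_0_r, Rabs_pos_eq by apply norm2_nonneg. unfold norm2. fold D.
 rewrite <- (sqrt_square e) by lra. apply sqrt_lt_1_alt. lra. Qed.


Definition ind (z : R) : R := if Req_EM_T z 0 then 0 else 1.
Definition upd (Z : nat -> nat -> R) j r w : nat -> nat -> R :=
  fun j' r' => if andb (Nat.eqb j' j) (Nat.eqb r' r) then w else Z j' r'.

Lemma ind_01 z : ind z = 0 \/ ind z = 1.
Proof. unfold ind; destruct Req_EM_T; auto. Qed.

Lemma Reg_upd x Z Gm j r w : (j < Ntil)%nat -> (r < v)%nat ->
  Rg x Z Gm - Rg x (upd Z j r w) Gm =
  beta * (tau j * (((sumR v (fun col => Om (Gm j) r col * x (patch j col)) - Z j r)^2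
          - (sumR v (fun col => Om (Gm j) r col * x (patch j col)) - w)^2)
          + gc^2 * (ind (Z j r) - ind w))).
Proof. intros Hj Hr. unfold Rg, Reg. rewrite <- Rmult_minus_distr_l. f_equal.
 rewrite (sumR_diff_one Ntil _ _ j Hj).
 - assert (E1 : patch_res v Om patch (Gm j) j x (Z j) - patch_res v Om patch (Gm j) j x (upd Z j r w j) =
     (sumR v (fun col => Om (Gm j) r col * x (patch j col)) - Z j r)^2
          - (sumR v (fun col => Om (Gm j) r col * x (patch j col)) - w)^2).
   { unfold patch_res. rewrite (sumR_diff_one v _ _ r Hr). unfold upd. rewrite !Nat.eqb_refl. reflexivity.
     intros i Hi Hne. unfold upd. rewrite Nat.eqb_refl. destruct (Nat.eqb_spec i r); [lia|reflexivity]. }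
   assert (E2 : l0 v (Z j) - l0 v (upd Z j r w j) = ind (Z j r) - ind w).
   { unfold l0. rewrite (sumR_diff_one v _ _ r Hr). unfold upd, ind. rewrite !Nat.eqb_refl. reflexivity.
     intros i Hi Hne. unfold upd. rewrite Nat.eqb_refl. destruct (Nat.eqb_spec i r); [lia|reflexivity]. }
   rewrite <- E1, <- E2. ring.
 - intros j' Hj' Hne. assert (E : upd Z j r w j' = Z j').
   { apply functional_extensionality. intros r'. unfold upd. destruct (Nat.eqb_spec j' j); [lia|reflexivity]. }
   rewrite E. reflexivity. Qed.

Lemma Zs_sparse n j r : (j < Ntil)%nat -> (r < v)%nat ->
  Zs (S n) j r = 0 \/
  (Zs (S n) j r = sumR v (fun col => Om (Gs (S n) j) r col * xs (S n) (patch j col)) /\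
   gc <= Rabs (sumR v (fun col => Om (Gs (S n) j) r col * xs (S n) (patch j col)))).
Proof. intros Hj Hr. set (aa := sumR v (fun col => Om (Gs (S n) j) r col * xs (S n) (patch j col))).
 set (z := Zs (S n) j r).
 assert (H : forall w, ((aa - z)^2 - (aa - w)^2) + gc^2 * (ind z - ind w) <= 0).
 { intros w. pose proof (HZG n (upd (Zs (S n)) j r w) (Gs (S n)) (HZG_feas n)) as H.
   pose proof (Reg_upd (xs (S n)) (Zs (S n)) (Gs (S n)) j r w Hj Hr) as E. unfold Rg in E. fold aa z in E.
   pose proof (Htau j Hj). set (X := ((aa - z)^2 - (aa - w)^2) + gc^2 * (ind z - ind w)) in *.
   assert (beta * (tau j * X) <= 0) by lra.
   destruct (Rle_or_lt X 0); auto. assert (0 < beta * (tau j * X)) by (apply Rmult_lt_0_compat; [lra|apply Rmult_lt_0_compat; lra]). lra. }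
 destruct (Req_EM_T z 0) as [Hz|Hz]; [left; auto|right].
 assert (Iz : ind z = 1) by (unfold ind; destruct Req_EM_T; [contradiction|auto]).
 pose proof (H aa) as H1. rewrite Iz in H1.
 assert (Hza : z = aa).
 { destruct (ind_01 aa) as [E|E]; rewrite E in H1;
   assert ((aa - z)^2 <= 0) by nra; assert (aa - z = 0) by nra; lra. }
 split; auto. pose proof (H 0) as H2. rewrite Iz in H2.
 assert (I0' : ind 0 = 0) by (unfold ind; destruct Req_EM_T; [auto|lra]). rewrite I0', Hza in H2.
 assert (gc^2 <= aa^2) by nra. rewrite <- (pow2_abs aa) in H0. pose proof (Rabs_pos aa).
 destruct (Rle_or_lt gc (Rabs aa)) as [|Hlt]; auto. assert (Rabs aa * Rabs aa < gc * gc) by (apply Rmult_le_0_lt_compat; lra). replace (gc^2) with (gc*gc) in H0 by ring. replace (Rabs aa ^2) with (Rabs aa * Rabs aa) in H0 by ring. lra. Qed.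

Definition MZ := sumR K (fun k => sumR v (fun r => sumR v (fun col => Rabs (Om k r col) * xmax))).

Lemma aa_bound x k j r : inX Np xmax x -> (k < K)%nat -> (j < Ntil)%nat -> (r < v)%nat ->
  Rabs (sumR v (fun col => Om k r col * x (patch j col))) <= MZ.
Proof. intros Hx Hk Hj Hr. eapply Rle_trans; [apply sumR_abs|].
 apply Rle_trans with (sumR v (fun col => Rabs (Om k r col) * xmax)).
 { apply sumR_le. intros col Hc. rewrite Rabs_mult. apply Rmult_le_compat_l. apply Rabs_pos.
   specialize (Hx (patch j col) (Hpatch j col Hj Hc)). rewrite Rabs_pos_eq; lra. }
 assert (Hnn : forall k r col, 0 <= Rabs (Om k r col) * xmax) by (intros; pose proof (Rabs_pos (Om k0 r0 col)); nra).
 unfold MZ. eapply Rle_trans; [|apply (sumR_term_le K _ k)]; auto.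
 2:{ intros; apply sumR_nonneg; intros; apply sumR_nonneg; auto. }
 apply (sumR_term_le v (fun r => sumR v (fun col => Rabs (Om k r col) * xmax)) r); auto.
 intros; apply sumR_nonneg; auto. Qed.

Lemma bounded : exists M, forall n,
      (forall p, (p < Np)%nat -> Rabs (xs n p) <= M) /\
      (forall j r, (j < Ntil)%nat -> (r < v)%nat -> Rabs (Zs n j r) <= M) /\
      (forall j, (j < Ntil)%nat -> INR (Gs n j) <= M).
Proof.
 set (Z0 := sumR Ntil (fun j => sumR v (fun r => Rabs (Zs 0%nat j r)))).
 assert (HMZ : 0 <= MZ). { unfold MZ. apply sumR_nonneg; intros; apply sumR_nonneg; intros; apply sumR_nonneg; intros.
   pose proof (Rabs_pos (Om i i0 i1)); nra. }
 assert (HZ0 : 0 <= Z0) by (apply sumR_nonneg; intros; apply sumR_nonneg; intros; apply Rabs_pos).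
 pose proof (pos_INR K).
 exists (xmax + MZ + Z0 + INR K). intros n. split; [|split].
 - intros p Hp. pose proof (xs_inX n p Hp). rewrite Rabs_pos_eq; lra.
 - intros j r Hj Hr. destruct n.
   + assert (Rabs (Zs 0%nat j r) <= Z0).
     { unfold Z0. eapply Rle_trans; [|apply (sumR_term_le Ntil _ j)]; auto.
       2:{ intros; apply sumR_nonneg; intros; apply Rabs_pos. }
       apply (sumR_term_le v (fun r => Rabs (Zs 0%nat j r))); auto. intros; apply Rabs_pos. }
     lra.
   + destruct (Zs_sparse n j r Hj Hr) as [E|[E _]]; rewrite E.
     rewrite Rabs_R0; lra.
     pose proof (aa_bound (xs (S n)) (Gs (S n) j) j r (xs_inX _) (HZG_feas n j Hj) Hj Hr). lra.
 - intros j Hj. pose proof (Gs_feas n j Hj). apply lt_INR in H0. lra. Qed.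


Definition GG := Gobj Nd Np v Ntil A I0 sigma2 Y s1 s2 xmax Om patch tau beta gc.

Lemma RegCV (xk : nat -> nat -> R) x Zk Z Gk Gm :
 vec_cv Np xk x ->
 (forall j r, (j < Ntil)%nat -> (r < v)%nat -> Un_cv (fun k => Zk k j r) (Z j r)) ->
 (forall j r, (j < Ntil)%nat -> (r < v)%nat -> exists N, forall k, (N <= k)%nat -> ind (Zk k j r) = ind (Z j r)) ->
 (exists N, forall k, (N <= k)%nat -> forall j, (j < Ntil)%nat -> Gk k j = Gm j) ->
 Un_cv (fun k => Rg (xk k) (Zk k) (Gk k)) (Rg x Z Gm).
Proof. intros Hx HZ Hind HG. apply (cv_eventual (fun k => Rg (xk k) (Zk k) Gm)).
 - unfold Rg, Reg. apply cv_scal. apply (sumR_cv Ntil (fun k j => tau j * (patch_res v Om patch (Gm j) j (xk k) (Zk k j) + gc ^ 2 * l0 v (Zk k j)))).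
   intros j Hj. apply cv_scal. apply CV_plus.
   + unfold patch_res. apply (sumR_cv v (fun k r => (sumR v (fun col => Om (Gm j) r col * xk k (patch j col)) - Zk k j r) ^ 2)).
     intros r Hr. apply cv_sq. apply CV_minus.
     * apply (sumR_cv v (fun k col => Om (Gm j) r col * xk k (patch j col))). intros col Hcol. apply cv_scal. apply Hx. apply Hpatch; auto.
     * apply HZ; auto.
   + apply cv_scal. unfold l0. apply (sumR_cv v (fun k r => if Req_EM_T (Zk k j r) 0 then 0 else 1)). intros r Hr.
     apply (cv_eventual (fun _ => ind (Z j r))). apply cv_const.
     destruct (Hind j r Hj Hr) as [N HN]. exists N; intros k Hk. symmetry; apply HN; auto.
 - destruct HG as [N HN]. exists N. intros k Hk. unfold Rg, Reg. f_equal. apply sumR_ext. intros j Hj. rewrite HN; auto. Qed.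

Lemma Lf_cv xk x : vec_cv Np xk x -> Un_cv (fun k => Lf (xk k)) (Lf x).
Proof. intros H. unfold Lf, Lfid. apply (sumR_cv Nd (fun k i => hi I0 sigma2 Y s1 s2 i (proj_l Np A (xk k) i))).
 intros i Hi. apply (cv_cont (hi I0 sigma2 Y s1 s2 i) (fun k => proj_l Np A (xk k) i)).
 intros; apply hi_cont; auto. apply proj_l_cv; auto. Qed.

Lemma Qsum_cv xk xbk x xb : vec_cv Np xk x -> vec_cv Np xbk xb -> (forall k, inX Np xmax (xbk k)) -> inX Np xmax xb ->
  Un_cv (fun k => sumR Nd (fun i => qi I0 sigma2 Y s1 s2 c i (proj_l Np A (xk k) i) (proj_l Np A (xbk k) i)))
        (sumR Nd (fun i => qi I0 sigma2 Y s1 s2 c i (proj_l Np A x i) (proj_l Np A xb i))).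
Proof. intros Hx Hxb Hk Hb.
 apply (sumR_cv Nd (fun k i => qi I0 sigma2 Y s1 s2 c i (proj_l Np A (xk k) i) (proj_l Np A (xbk k) i))).
 intros i Hi. apply qi_cv; auto. apply Hccont; auto. apply proj_l_nonneg; auto.
 intros; apply proj_l_nonneg; auto. apply proj_l_cv; auto. apply proj_l_cv; auto. Qed.

Lemma frechet0 xst Z Gm Gstar : inX Np xmax xst -> GG xst Z Gm = Fin Gstar ->
  (forall y, inX Np xmax y -> Gstar <= sumR Nd (fun i => qi I0 sigma2 Y s1 s2 c i (proj_l Np A y i) (proj_l Np A xst i)) + Rg y Z Gm) ->
  frechet_subgrad Np (fun x => GG x Z Gm) xst (fun _ => 0).
Proof. intros Hxst HGv Hkey. exists Gstar. split; auto. intros eps Heps.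
 set (lb := fun i => proj_l Np A xst i).
 set (a := fun i => sumR Np (fun p => Rabs (A i p))).
 set (Sa := sumR Nd a).
 assert (Ha : forall i, 0 <= a i) by (intros; apply sumR_nonneg; intros; apply Rabs_pos).
 assert (HSa : 0 <= Sa) by (apply sumR_nonneg; auto).
 assert (HaS : forall i, (i < Nd)%nat -> a i <= Sa) by (intros; apply (sumR_term_le Nd a); auto).
 set (Ci := fun i => c i (lb i) / 2).
 assert (HCi : forall i, (i < Nd)%nat -> 0 <= Ci i).
 { intros i Hi. unfold Ci. pose proof (Hcpos i (lb i) Hi (proj_l_nonneg xst i Hxst Hi)). lra. }
 set (SC := sumR Nd (fun i => Ci i * (a i)^2)).
 assert (HSC : 0 <= SC) by (apply sumR_nonneg; intros i Hi; pose proof (HCi i Hi); pose proof (pow2_ge_0 (a i)); nra).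
 set (eps1 := eps / (2 * (Sa + 1))).
 assert (He1 : 0 < eps1) by (unfold eps1; apply Rdiv_lt_0_compat; lra).
 destruct (fin_min Nd (fun i d => forall h, Rabs h < d ->
    hi I0 sigma2 Y s1 s2 i (lb i + h) - hi I0 sigma2 Y s1 s2 i (lb i) - hdot I0 sigma2 Y s1 s2 i (lb i) * h >= - eps1 * Rabs h))
   as [d1 [Hd1 H1]].
 { intros i Hi. destruct (hi_derive I0 sigma2 Y s1 s2 i (lb i) HI0 Hsigma eps1 He1) as [del Hdel].
   exists del. split. apply cond_pos. intros d' Hd' Hle h Hh.
   destruct (Req_EM_T h 0) as [E|E].
   - subst. rewrite Rplus_0_r, Rabs_R0. lra.
   - specialize (Hdel h E ltac:(lra)).
     set (Dl := hi I0 sigma2 Y s1 s2 i (lb i + h) - hi I0 sigma2 Y s1 s2 i (lb i)) in *.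
     set (hd := hdot I0 sigma2 Y s1 s2 i (lb i)) in *.
     assert (Eq : Dl - hd * h = (Dl / h - hd) * h) by (field; auto).
     assert (Rabs (Dl - hd * h) <= eps1 * Rabs h).
     { rewrite Eq, Rabs_mult. apply Rmult_le_compat_r. apply Rabs_pos. lra. }
     assert (-(Dl - hd*h) <= Rabs (Dl - hd*h)) by (rewrite <- Rabs_Ropp; apply Rle_abs). lra. }
 set (delta := Rmin (d1 / (Sa + 1)) (eps / (2 * (SC + 1)))).
 assert (Hdel1 : delta <= d1 / (Sa + 1)) by apply Rmin_l.
 assert (Hdel2 : delta <= eps / (2 * (SC + 1))) by apply Rmin_r.
 exists delta. split. { apply Rmin_pos; apply Rdiv_lt_0_compat; lra. }
 intros y Hy. unfold GG, Gobj. destruct (inXb Np xmax y) eqn:Ey; simpl; auto.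
 apply inXb_iff in Ey.
 assert (Hdot : dotn Np (fun _ => 0) (vsub y xst) = 0).
 { unfold dotn. rewrite (sumR_ext Np _ (fun _ => 0)). apply sumR_zero. intros; ring. }
 rewrite Hdot.
 set (N := norm2 Np (vsub y xst)) in *.
 assert (HN : 0 <= N) by apply norm2_nonneg.
 assert (HNd1 : (Sa + 1) * N < d1).
 { apply Rlt_le_trans with ((Sa + 1) * delta). apply Rmult_lt_compat_l; lra.
   apply Rle_trans with ((Sa+1) * (d1 / (Sa + 1))). apply Rmult_le_compat_l; lra. right; field; lra. }
 assert (Hper : forall i, (i < Nd)%nat ->
   qi I0 sigma2 Y s1 s2 c i (proj_l Np A y i) (lb i) - (eps1 * N * a i + N^2 * (Ci i * (a i)^2))
     <= hi I0 sigma2 Y s1 s2 i (proj_l Np A y i)).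
 { intros i Hi. set (D := proj_l Np A y i - lb i).
   assert (HD : Rabs D <= a i * N) by (apply proj_l_lip).
   assert (HDS : Rabs D < d1). { pose proof (HaS i Hi). assert (a i * N <= Sa * N) by (apply Rmult_le_compat_r; auto). lra. }
   specialize (H1 d1 Hd1 (Rle_refl _) i Hi D HDS).
   replace (lb i + D) with (proj_l Np A y i) in H1 by (unfold D; ring).
   unfold qi. fold D. fold (lb i).
   assert (HD2 : D^2 <= (a i * N)^2).
   { rewrite <- (pow2_abs D). pose proof (Rabs_pos D). apply pow_incr; lra. }
   pose proof (HCi i Hi). unfold Ci in *.
   assert (/2 * c i (lb i) * D^2 <= N^2 * (c i (lb i) / 2 * a i ^2)).
   { replace (N^2 * (c i (lb i) / 2 * a i ^2)) with (/2 * c i (lb i) * (a i * N)^2) by (unfold Rdiv; ring).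
     apply Rmult_le_compat_l; [lra|auto]. }
   assert (eps1 * Rabs D <= eps1 * N * a i).
   { replace (eps1 * N * a i) with (eps1 * (a i * N)) by ring. apply Rmult_le_compat_l; lra. }
   lra. }
 assert (Hsum := sumR_le Nd _ _ Hper).
 rewrite sumR_minus, sumR_plus, sumR_scal, sumR_scal in Hsum. fold Sa SC in Hsum.
 change (sumR Nd (fun i => hi I0 sigma2 Y s1 s2 i (proj_l Np A y i))) with (Lf y) in Hsum.
 specialize (Hkey y Ey).
 assert (HT1 : eps1 * N * Sa <= eps / 2 * N).
 { unfold eps1. replace (eps / (2 * (Sa + 1)) * N * Sa) with (eps / 2 * N * (Sa / (Sa + 1))) by (field; lra).
   assert (Sa / (Sa+1) <= 1). { apply (Rmult_le_reg_l (Sa+1)); [lra|]. field_simplify; lra. }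
   assert (0 <= eps / 2 * N) by (apply Rmult_le_pos; lra). nra. }
 assert (HT2 : N^2 * SC <= eps / 2 * N).
 { assert (N <= eps / (2 * (SC + 1))) by lra.
   assert (SC * N <= eps / 2). { apply Rle_trans with (SC * (eps / (2 * (SC + 1)))). apply Rmult_le_compat_l; lra.
     replace (SC * (eps / (2 * (SC + 1)))) with (eps / 2 * (SC / (SC + 1))) by (field; lra).
     assert (SC / (SC+1) <= 1). { apply (Rmult_le_reg_l (SC+1)); [lra|]. field_simplify; lra. }
     nra. }
   replace (N^2 * SC) with (N * (SC * N)) by ring. replace (eps / 2 * N) with (N * (eps/2)) by ring.
   apply Rmult_le_compat_l; auto. }
 unfold Lf in Hsum. unfold Rg in Hkey. unfold lb in Hsum. lra. Qed.


Lemma cv_squeeze0 u w : Un_cv w 0 -> (forall k, Rabs (u k) <= w k) -> Un_cv u 0.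
Proof. intros Hw H e He. destruct (Hw e He) as [N HN]. exists N. intros n Hn. specialize (HN n Hn).
 unfold Rdist in *. rewrite Rminus_0_r in *. pose proof (H n). pose proof (Rle_abs (w n)). 
 lra. Qed.

Lemma acc_props Gstar xst Zst Gst : Un_cv gfun Gstar ->
  accum_point Np v Ntil xs Zs Gs xst Zst Gst ->
  GG xst Zst Gst = Fin Gstar /\
  limiting_subgrad Np (fun x => GG x Zst Gst) xst (fun _ => 0) /\
  (forall j, (j < Ntil)%nat -> (Gst j < K)%nat) /\
  (forall Z Gm, (forall j, (j < Ntil)%nat -> (Gm j < K)%nat) -> ER_le (GG xst Zst Gst) (GG xst Z Gm)).
Proof. intros HG [phi [Hphi [Hx [HZ [k0 HGs]]]]].
 assert (Hge : forall k, (k <= phi k)%nat). { induction k; [lia| specialize (Hphi k); lia]. }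
 assert (Hxst : inX Np xmax xst).
 { intros p Hp. apply (cv_bounds (fun k => xs (phi k) p)). apply Hx; auto. exists 0%nat; intros; apply xs_inX; auto. }
 assert (HGst : forall j, (j < Ntil)%nat -> (Gst j < K)%nat).
 { intros j Hj. rewrite <- (HGs k0 (le_n _) j Hj). apply Gs_feas; auto. }
 assert (Hind : forall j r, (j < Ntil)%nat -> (r < v)%nat -> exists N, forall k, (N <= k)%nat ->
     ind (Zs (phi k) j r) = ind (Zst j r)).
 { intros j r Hj Hr. destruct (Req_EM_T (Zst j r) 0) as [E|E].
   - destruct (HZ j r Hj Hr gc Hgc) as [N HN]. exists (max N 1). intros k Hk.
     specialize (HN k ltac:(lia)). unfold Rdist in HN. rewrite E, Rminus_0_r in HN.
     pose proof (Hge k). destruct (phi k) as [|m] eqn:Ep; [lia|].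
     destruct (Zs_sparse m j r Hj Hr) as [E2|[E2 E3]].
     + rewrite E2, E. auto.
     + rewrite E2 in HN. lra.
   - assert (Hp : 0 < Rabs (Zst j r)) by (apply Rabs_pos_lt; auto).
     destruct (HZ j r Hj Hr _ Hp) as [N HN]. exists N. intros k Hk. specialize (HN k Hk). unfold Rdist in HN.
     unfold ind. destruct (Req_EM_T (Zs (phi k) j r) 0) as [E2|E2]; destruct (Req_EM_T (Zst j r) 0); try contradiction; auto.
     rewrite E2 in HN. rewrite Rminus_0_l, Rabs_Ropp in HN. lra. }
 assert (HGev : exists N, forall k, (N <= k)%nat -> forall j, (j < Ntil)%nat -> Gs (phi k) j = Gst j) by (exists k0; auto).
 assert (HRcv : Un_cv (fun k => Rg (xs (phi k)) (Zs (phi k)) (Gs (phi k))) (Rg xst Zst Gst)).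
 { apply RegCV; auto. }
 assert (Hgst : Gstar = Lf xst + Rg xst Zst Gst).
 { apply (UL_sequence (fun k => gfun (phi k))). apply cv_sub; auto.
   unfold gfun. apply CV_plus; auto. apply Lf_cv; auto. }
 assert (HGv : GG xst Zst Gst = Fin Gstar).
 { unfold GG, Gobj. rewrite inXb_true by auto. rewrite Hgst. reflexivity. }
 split; [auto|split; [|split; [auto|]]].
 2:{ intros Z Gm HGm. unfold GG, Gobj. rewrite inXb_true by auto. simpl.
   assert (Rg xst Zst Gst <= Rg xst Z Gm).
   { apply (cv_le (fun k => Rg (xs (phi k)) (Zs (phi k)) (Gs (phi k))) (fun k => Rg (xs (phi k)) Z Gm)); auto.
     - apply (RegCV (fun k => xs (phi k)) xst (fun _ => Z) Z (fun _ => Gm) Gm); auto.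
       + intros; apply cv_const.
       + intros; exists 0%nat; auto.
       + exists 0%nat; auto.
     - exists 1%nat. intros k Hk. pose proof (Hge k). destruct (phi k) as [|m] eqn:Ep; [lia|].
       apply HZG; auto. }
   unfold Rg in H. lra. }
 assert (Hnext : vec_cv Np (fun k => xs (S (phi k))) xst).
 { intros p Hp. apply (cv_ext (fun k => xs (phi k) p + (xs (S (phi k)) p - xs (phi k) p))). intros; ring.
   rewrite <- (Rplus_0_r (xst p)). apply CV_plus. apply Hx; auto.
   apply (cv_squeeze0 _ (fun k => norm2 Np (vsub (xs (S (phi k))) (xs (phi k))))).
   apply (cv_sub (fun n => norm2 Np (vsub (xs (S n)) (xs n)))); auto. apply step_cv.
   intros k. apply (coord_le Np (vsub (xs (S (phi k))) (xs (phi k))) p Hp). }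
 assert (Hkey : forall y, inX Np xmax y -> Gstar <= sumR Nd (fun i => qi I0 sigma2 Y s1 s2 c i (proj_l Np A y i) (proj_l Np A xst i)) + Rg y Zst Gst).
 { intros y Hy. rewrite Hgst, <- Qsum_same.
   apply (cv_le (fun k => PhiF (xs (phi k)) (Zs (phi k)) (Gs (phi k)) (xs (S (phi k))))
                (fun k => PhiF (xs (phi k)) (Zs (phi k)) (Gs (phi k)) y)).
   - unfold PhiF. apply CV_plus. apply Qsum_cv; auto. intros; apply xs_inX.
     apply RegCV; auto.
   - unfold PhiF. apply CV_plus. apply (Qsum_cv (fun _ => y)); auto. intros p Hp; apply cv_const. intros; apply xs_inX.
     apply (RegCV (fun _ => y)); auto. intros p Hp; apply cv_const.
   - exists 0%nat. intros k _. pose proof (Himg (phi k) y) as Hi. rewrite !Fmaj_eq, !inXb_true in Hi by (auto; apply xs_inX).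
     exact Hi. }
 exists Gstar, (fun _ => xst), (fun _ _ => 0), (fun _ => Gstar).
 split; [auto|split; [auto|split; [|split; [|split]]]].
 - intros p Hp; apply cv_const.
 - apply cv_const.
 - intros k. apply (frechet0 xst Zst Gst Gstar); auto.
 - intros p Hp; apply cv_const. Qed.

Lemma main_result :
  (exists M, forall n,
      (forall p, (p < Np)%nat -> Rabs (xs n p) <= M) /\
      (forall j r, (j < Ntil)%nat -> (r < v)%nat -> Rabs (Zs n j r) <= M) /\
      (forall j, (j < Ntil)%nat -> INR (Gs n j) <= M)) /\
  (exists (Gstar : R) (g : nat -> R),
      (forall n, GG (xs n) (Zs n) (Gs n) = Fin (g n)) /\
      (forall n, g (S n) <= g n) /\
      Un_cv g Gstar /\
      (forall xst Zst Gst, accum_point Np v Ntil xs Zs Gs xst Zst Gst ->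
         GG xst Zst Gst = Fin Gstar /\
         limiting_subgrad Np (fun x => GG x Zst Gst) xst (fun _ => 0) /\
         (forall j, (j < Ntil)%nat -> (Gst j < K)%nat) /\
         (forall Z Gm, (forall j, (j < Ntil)%nat -> (Gm j < K)%nat) ->
            ER_le (GG xst Zst Gst) (GG xst Z Gm)))) /\
  Un_cv (fun n => norm2 Np (vsub (xs (S n)) (xs n))) 0.
Proof. split; [apply bounded|split; [|apply step_cv]].
 destruct gfun_cv as [Gstar HG]. exists Gstar, gfun. split; [|split; [|split]].
 - intros n. unfold GG, Gobj. rewrite inXb_true by apply xs_inX. reflexivity.
 - apply gfun_dec.
 - auto.
 - intros. apply acc_props; auto. Qed.

End Model.

Theorem theorem1
  (Nd Np v Ntil K : nat) (A : nat -> nat -> R)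
  (I0 sigma2 xmax beta gc : R) (Y s1 s2 tau : nat -> R)
  (patch : nat -> nat -> nat) (Om : nat -> nat -> nat -> R)
  (c : nat -> R -> R)
  (xs : nat -> nat -> R) (Zs : nat -> nat -> nat -> R) (Gs : nat -> nat -> nat)
  (HA : forall i p, (i < Nd)%nat -> (p < Np)%nat -> 0 <= A i p)
  (HI0 : 0 < I0) (Hsigma : 0 <= sigma2) (Hxmax : 0 < xmax)
  (Hpatch : forall j r, (j < Ntil)%nat -> (r < v)%nat -> (patch j r < Np)%nat)
  (Hcover : forall p, (p < Np)%nat ->
      exists j r, (j < Ntil)%nat /\ (r < v)%nat /\ patch j r = p)
  (HOm : forall k, (k < K)%nat -> nonsingular v (Om k))
  (Htau : forall j, (j < Ntil)%nat -> 0 < tau j)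
  (Hbeta : 0 < beta) (Hgc : 0 < gc)
  (Hcpos : forall i l, (i < Nd)%nat -> 0 <= l -> 0 < c i l)
  (Hccont : forall i l, (i < Nd)%nat -> 0 <= l ->
      limit1_in (c i) (fun t => 0 <= t) (c i l) l)
  (Hcmaj : forall i l lbar, (i < Nd)%nat -> 0 <= l -> 0 <= lbar ->
      hi I0 sigma2 Y s1 s2 i l <= qi I0 sigma2 Y s1 s2 c i l lbar)
  (Hx0 : inX Np xmax (xs 0%nat))
  (HG0 : forall j, (j < Ntil)%nat -> (Gs 0%nat j < K)%nat)
  (Himg : forall n x,
      ER_le (Fmaj Nd Np v Ntil A I0 sigma2 Y s1 s2 c xmax Om patch tau beta gc
               (xs (S n)) (Zs n) (Gs n) (xs n))
            (Fmaj Nd Np v Ntil A I0 sigma2 Y s1 s2 c xmax Om patch tau beta gc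
               x (Zs n) (Gs n) (xs n)))
  (HZG_feas : forall n j, (j < Ntil)%nat -> (Gs (S n) j < K)%nat)
  (HZG : forall n Z Gm, (forall j, (j < Ntil)%nat -> (Gm j < K)%nat) ->
      Reg v Ntil Om patch tau beta gc (xs (S n)) (Zs (S n)) (Gs (S n))
      <= Reg v Ntil Om patch tau beta gc (xs (S n)) Z Gm) :
  let G := Gobj Nd Np v Ntil A I0 sigma2 Y s1 s2 xmax Om patch tau beta gc in
  (* (i) boundedness *)
  (exists M, forall n,
      (forall p, (p < Np)%nat -> Rabs (xs n p) <= M) /\
      (forall j r, (j < Ntil)%nat -> (r < v)%nat -> Rabs (Zs n j r) <= M) /\
      (forall j, (j < Ntil)%nat -> INR (Gs n j) <= M)) /\
  (exists (Gstar : R) (g : nat -> R),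
      (* (ii) monotone, convergent to a finite limit *)
      (forall n, G (xs n) (Zs n) (Gs n) = Fin (g n)) /\
      (forall n, g (S n) <= g n) /\
      Un_cv g Gstar /\
      (forall xst Zst Gst, accum_point Np v Ntil xs Zs Gs xst Zst Gst ->
         (* (iii) *)
         G xst Zst Gst = Fin Gstar /\
         (* (iv) partial optimality *)
         limiting_subgrad Np (fun x => G x Zst Gst) xst (fun _ => 0) /\
         (forall j, (j < Ntil)%nat -> (Gst j < K)%nat) /\
         (forall Z Gm, (forall j, (j < Ntil)%nat -> (Gm j < K)%nat) ->
            ER_le (G xst Zst Gst) (G xst Z Gm)))) /\
  (* (v) *)
  Un_cv (fun n => norm2 Np (vsub (xs (S n)) (xs n))) 0.
Proof. intros G. exact (main_result Nd Np v Ntil K A I0 sigma2 xmax beta gc Y s1 s2 tau patch Om c xs Zs Gs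
  HA HI0 Hsigma Hxmax Hpatch Hcover HOm Htau Hbeta Hgc Hcpos Hccont Hcmaj Hx0 HG0 Himg HZG_feas HZG). Qed.
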